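(* Let $G$ be a finite group. Then the commuting graph $\Gamma_C(G)$ is minimally connected if and only if $G$ is abelian.
   Context: The commuting graph $\Gamma_C(G)$ of a group $G$ is the simple undirected graph with vertex set $G$ in which two distinct elements $x,y$ are adjacent if and only if $xy=yx$. For a connected graph $\Gamma$, a vertex cut-set is a set $S$ of vertices such that $\Gamma-S$ is disconnected or has just one vertex, and the vertex connectivity $\kappa(\Gamma)$ is the smallest size of a vertex cut-set. $\Gamma$ is minimally connected if $\kappa(\Gamma-\epsilon)=\kappa(\Gamma)-1$ for every edge $\epsilon$ of $\Gamma$. *)

(* Defs.v *)
From mathcomp Require Import all_boot all_fingroup.
Set Implicit Arguments. Unset Strict Implicit. Unset Printing Implicit Defensive.

(* A finite simple graph on a finType T: vertex set V : {set T}, edge set E of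
   2-element subsets [set u; v] (u != v) of V. *)
Section Graphs.
Variable T : finType.

Definition ind_adj (E : {set {set T}}) (W : {set T}) : rel T :=
  fun u v => [&& u \in W, v \in W, u != v & [set u; v] \in E].

Definition gconnected (W : {set T}) (E : {set {set T}}) : bool :=
  [forall x, forall y, (x \in W) ==> (y \in W) ==> connect (ind_adj E W) x y].

Definition is_cutset (V : {set T}) (E : {set {set T}}) (S : {set T}) : bool :=
  (S \subset V) && ((#|V :\: S| == 1) || ~~ gconnected (V :\: S) E).

Definition kappa (V : {set T}) (E : {set {set T}}) : nat :=
  \big[minn/#|V|]_(S : {set T} | is_cutset V E S) #|S|.

Definition minimally_connected (V : {set T}) (E : {set {set T}}) : bool :=
  gconnected V E &&
  [forall e in E, kappa V (E :\ e) == (kappa V E).-1].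
End Graphs.

Definition commuting_edges (gT : finGroupType) (G : {set gT}) : {set {set gT}} :=
  [set [set x; y] | x in G, y in G & (x != y) && (x * y == y * x)%g].

(* Main.v *)
Require Import Defs.
From mathcomp Require Import all_boot all_fingroup.
From mathcomp Require Import zify.

Set Implicit Arguments. Unset Strict Implicit. Unset Printing Implicit Defensive.

Section Gen.
Variable T : finType.

Lemma kappa_ge (V : {set T}) E m : m <= #|V| ->
  (forall S, is_cutset V E S -> m <= #|S|) -> m <= kappa V E.
Proof.
move=> h1 h2; rewrite /kappa; apply: (big_ind (fun x => m <= x)) => //.
by move=> x y hx hy; rewrite leq_min hx hy.
Qed.

Lemma kappa_le (V : {set T}) E S : is_cutset V E S -> kappa V E <= #|S|.
Proof.
move=> h; rewrite /kappa.
have : S \in index_enum (Finite.clone _ {set T}) by rewrite mem_index_enum.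
elim: (index_enum _) => [|i r IH] //; rewrite big_cons in_cons => /orP[/eqP<-|hr].
  by rewrite h geq_minl.
by case: ifP => _; [rewrite geq_min IH ?orbT | exact: IH].
Qed.

Lemma kappa_leV (V : {set T}) E : kappa V E <= #|V|.
Proof.
rewrite /kappa; apply: (big_ind (fun x => x <= #|V|)) => //.
  by move=> x y hx _; rewrite geq_min hx.
by move=> S /andP[hS _]; exact: subset_leq_card.
Qed.

Lemma conn_closed (e : rel T) (A : {set T}) x y :
  (forall a b, a \in A -> e a b -> b \in A) -> x \in A -> connect e x y -> y \in A.
Proof.
move=> hA hx /connectP [p hp ->]; elim: p x hx hp => [|z p IH] x hx //=.
by case/andP=> exz hp; apply: IH hp; exact: hA exz.
Qed.

Lemma gconn_intro (W : {set T}) E :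
  (forall x y, x \in W -> y \in W -> x != y ->
     ind_adj E W x y \/ exists z, ind_adj E W x z /\ ind_adj E W z y) ->
  gconnected W E.
Proof.
move=> h; apply/forallP=> x; apply/forallP=> y; apply/implyP=> hx; apply/implyP=> hy.
case: (eqVneq x y) => [->|nxy]; first exact: connect0.
case: (h x y hx hy nxy) => [e1|[z [e1 e2]]]; first exact: connect1.
exact: connect_trans (connect1 e1) (connect1 e2).
Qed.

Lemma set2_eqP (a b x y : T) : a != b -> [set a; b] = [set x; y] ->
  (a = x /\ b = y) \/ (a = y /\ b = x).
Proof.
move=> nab e.
have ha : a \in [set x; y] by rewrite -e set21.
have hb : b \in [set x; y] by rewrite -e set22.
move: ha hb; rewrite !in_set2 => ha hb.
case/orP: ha => /eqP ha; case/orP: hb => /eqP hb; subst; auto;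
  by rewrite eqxx in nab.
Qed.

Lemma ind_adj_sym (E : {set {set T}}) (W : {set T}) a b : ind_adj E W a b = ind_adj E W b a.
Proof. by rewrite /ind_adj setUC eq_sym; case: (a \in W); case: (b \in W). Qed.

Lemma not_conn2 (E : {set {set T}}) (x y : T) : x != y -> [set x; y] \notin E ->
  ~~ gconnected [set x; y] E.
Proof.
move=> nxy nE; apply/negP => /forallP/(_ x)/forallP/(_ y).
rewrite set21 set22 /= => c.
have : y \in [set x] .
  apply: (conn_closed _ _ c); last by rewrite set11.
  move=> a b; rewrite in_set1 => /eqP -> /and4P[_ hb xb hE].
  move: hb; rewrite in_set2 eq_sym (negbTE xb) /= => /eqP hb; subst b.
  by rewrite (negbTE nE) in hE.
by rewrite in_set1 eq_sym (negbTE nxy).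
Qed.

Lemma key (E : {set {set T}}) (W : {set T}) u w :
  u != w ->
  (forall x, x \in W -> x != u -> x != w -> ([set u; x] \in E) = ([set w; x] \in E)) ->
  gconnected W E -> W != [set u; w] -> gconnected W (E :\ [set u; w]).
Proof.
move=> nuw hsame hc hW.
suff sub : subrel (ind_adj E W) (connect (ind_adj (E :\ [set u; w]) W)).
  apply/forallP=> a; apply/forallP=> b; apply/implyP=> ha; apply/implyP=> hb.
  apply: connect_sub sub _ _ _.
  by move/forallP: hc => /(_ a)/forallP/(_ b); rewrite ha hb.
have direct : forall p q, ind_adj E W p q -> [set p; q] != [set u; w] ->
    ind_adj (E :\ [set u; w]) W p q.
  move=> p q /and4P[hp hq npq hE] ne.
  by rewrite /ind_adj hp hq npq !inE ne hE.
case: (boolP [exists x, [&& x \in W, x != u, x != w & [set u; x] \in E]]).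
  case/existsP=> x /and4P[hx xu xw hux].
  move=> p q hpq; case: (boolP ([set p; q] == [set u; w])) => ne; last first.
    by apply: connect1; apply: direct.
  move/eqP: ne => ne.
  case/and4P: (hpq) => hp hq npq _.
  have xnot : x \notin [set u; w] by rewrite in_set2 negb_or xu xw.
  have a1 : ind_adj (E :\ [set u; w]) W u x.
    rewrite /ind_adj hx eq_sym xu !inE hux andbT.
    have -> : u \in W by case: (set2_eqP npq ne) => [[<- _]|[_ <-]].
    rewrite /=; apply/negP => /eqP e2; move: xnot; by rewrite -e2 set22.
  have a2 : ind_adj (E :\ [set u; w]) W x w.
    rewrite /ind_adj hx xw !inE setUC -hsame // hux andbT.
    have -> : w \in W by case: (set2_eqP npq ne) => [[_ <-]|[<- _]].
    rewrite /=; apply/negP => /eqP e2; move: xnot; by rewrite -e2 set22.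
  case: (set2_eqP npq ne) => [[-> ->]|[-> ->]].
    exact: connect_trans (connect1 a1) (connect1 a2).
  rewrite ind_adj_sym in a1; rewrite ind_adj_sym in a2.
  exact: connect_trans (connect1 a2) (connect1 a1).
rewrite negb_exists => /forallP hno.
case: (boolP ((u \in W) && (w \in W))) => [/andP[uW wW]|nW].
  have : W :\: [set u; w] != set0.
    apply/negP; rewrite setD_eq0 => s1; move/negP: hW; apply.
    rewrite eqEsubset s1; apply/subsetP=> z; rewrite in_set2.
    by case/orP=> /eqP ->.
  case/set0Pn=> y; rewrite inE in_set2 negb_or => /andP[/andP[yu yw] yW].
  have : y \in [set u; w].
    have c : connect (ind_adj E W) u y.
      by move/forallP: hc => /(_ u)/forallP/(_ y); rewrite uW yW.
    apply: (conn_closed _ _ c); last exact: set21.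
    move=> a b; rewrite in_set2 => ha /and4P[_ hb nab hE].
    apply/negPn/negP; rewrite in_set2 negb_or => /andP[bu bw].
    move: (hno b); rewrite hb bu bw /=.
    case/orP: ha => /eqP ha; subst a; first by rewrite hE.
    by rewrite hsame // hE.
  by rewrite in_set2 (negbTE yu) (negbTE yw).
move=> p q hpq; apply: connect1; apply: direct => //.
apply/negP=> /eqP e2; case/and4P: hpq => hp hq npq _; move/negP: nW; apply.
have hu : u \in [set p; q] by rewrite e2 set21.
have hw : w \in [set p; q] by rewrite e2 set22.
move: hu hw; rewrite !in_set2.
by case/orP=> /eqP ->; case/orP=> /eqP ->; rewrite ?hp ?hq.
Qed.

End Gen.

Lemma ar1 a b : 2 = a - b -> b <= a -> a - 2 <= b. Proof. lia. Qed.
Lemma ar2 a : 0 < a -> a <= a.-1 -> False. Proof. lia. Qed.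

Lemma ar3 a b : a = 1 + b -> a - b = 1. Proof. lia. Qed.
Lemma ar4 a b : a = 1 + b -> b <= a.-1. Proof. lia. Qed.
Lemma ar5 a b : a - b = 1 -> a.-1 <= b. Proof. lia. Qed.
Lemma ar6 a : a - 2 <= a.-1.-1. Proof. lia. Qed.
Lemma ar7 a : a.-1.-1 <= a. Proof. lia. Qed.
Lemma ar8 a b c : c = a - b -> c <= 2 -> a.-1.-1 <= b. Proof. lia. Qed.
Lemma ar10 a b : 2 < a -> b <= 2 -> 0 < a - b. Proof. lia. Qed.

Section Grp.
Variable gT : finGroupType.

Lemma ceP (G : {set gT}) a b : a != b ->
  ([set a; b] \in commuting_edges G) = [&& a \in G, b \in G & (a * b == b * a)%g].
Proof.
move=> nab; apply/imset2P/idP.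
  case=> x y hx; rewrite inE => /andP[hy /andP[nxy cxy]] e.
  case: (set2_eqP nab e) => [[-> ->]|[-> ->]]; rewrite hx hy //=.
  by rewrite eq_sym.
case/and3P=> ha hb c; exists a b => //; by rewrite inE hb nab c.
Qed.

Lemma comV (u x : gT) : (u * x == x * u)%g = (u^-1 * x == x * u^-1)%g.
Proof.
apply/eqP/eqP => h.
  have h1 : commute u x by [].
  exact: commute_sym (commuteV (commute_sym h1)).
have h1 : commute u^-1 x by [].
by have := commute_sym (commuteV (commute_sym h1)); rewrite invgK.
Qed.

Lemma cards2G (G : {set gT}) x y : x \in G -> y \in G -> x != y ->
  #|G :\: [set x; y]| = #|G| - 2 /\ G :\: (G :\: [set x; y]) = [set x; y].
Proof.
move=> hx hy nxy.
have sub : [set x; y] \subset G.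
  by apply/subsetP=> z; rewrite in_set2 => /orP[] /eqP ->.
split; first by rewrite cardsDS // cards2 nxy.
by rewrite setDDr setDv set0U; apply/setIidPr.
Qed.

End Grp.

Theorem mainTheorem8 (gT : finGroupType) (G : {group gT}) :
  minimally_connected G (commuting_edges G) <-> abelian G.
Proof.
set E := commuting_edges G.
split.
  case/andP => hc /forall_inP hmin; apply/idPn => nab.
  have [x [y [hx hy cxy]]] : exists x y, [/\ x \in G, y \in G & (x * y != y * x)%g].
    case: (boolP [exists x in G, exists y in G, (x * y != y * x)%g]).
      by case/exists_inP=> x hx /exists_inP[y hy c]; exists x, y.
    rewrite negb_exists_in => /forall_inP h; case/negP: nab.
    apply/centsP=> x hx y hy; move: (h x hx); rewrite negb_exists_in.
    by move=> /forall_inP /(_ y hy); rewrite negbK => /eqP.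
  have [u hu nu] : exists2 u, u \in G & u != u^-1%g.
    case: (boolP [exists u in G, u != u^-1%g]).
      by case/exists_inP=> u hu nu; exists u.
    rewrite negb_exists_in => /forall_inP h; case/negP: nab.
    have e z : z \in G -> (z^-1 = z)%g.
      by move=> hz; have := h z hz; rewrite negbK => /eqP ez; rewrite -ez.
    apply/centsP=> a ha b hb; rewrite /commute.
    by rewrite -(e (a * b)%g (groupM ha hb)) invMg (e a ha) (e b hb).
  set w := (u^-1)%g.
  have hw : w \in G by rewrite groupV.
  have he : [set u; w] \in E by rewrite ceP // hu hw /= /w mulgV mulVg eqxx.
  move: (hmin _ he) => /eqP hk.
  have nxy : x != y by apply/negP=> /eqP exy; move: cxy; rewrite exy eqxx.
  have [cS0 eS0] := cards2G hx hy nxy.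
  have cut0 : is_cutset G E (G :\: [set x; y]).
    rewrite /is_cutset subsetDl eS0 cards2 nxy /=.
    by apply: not_conn2 => //; rewrite ceP // hx hy /= (negbTE cxy).
  have k1 : 0 < kappa G E.
    apply: (@kappa_ge _ _ _ 1); first by rewrite cardG_gt0.
    move=> S hS; rewrite lt0n; apply/negP => /eqP /cards0_eq S0.
    move: hS; rewrite /is_cutset S0 setD0 hc orbF sub0set /=.
    have : #|[set u; w]| <= #|G|.
      by apply: subset_leq_card; apply/subsetP=> z; rewrite in_set2 => /orP[] /eqP ->.
    rewrite cards2 nu => h2 /eqP h3; rewrite h3 in h2; by [].
  have k2 : kappa G E <= kappa G (E :\ [set u; w]).
    apply: kappa_ge; first exact: kappa_leV.
    move=> S hS; case/andP: (hS) => sSG hS'.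
    case: (boolP (is_cutset G E S)) => [h|hn]; first exact: kappa_le.
    case: (boolP (G :\: S == [set u; w])) => [/eqP hW | hW].
      apply: leq_trans (kappa_le cut0) _.
      have c1 : #|G :\: S| = #|G| - #|S| by rewrite cardsDS.
      have c2 : #|S| <= #|G| by apply: subset_leq_card.
      rewrite hW cards2 nu in c1.
      rewrite cS0; move: c1 c2; move: #|G| #|S|; exact: ar1.
    case/negP: hn; rewrite /is_cutset sSG /=.
    case/orP: hS' => [h1|nc]; first by rewrite h1.
    apply/orP; right; apply: contra nc => gc; apply: key => //.
    move=> z hz zu zw; rewrite !ceP 1?eq_sym //; rewrite hu hw /=.
    by congr (_ && _); rewrite /w -comV; exact: eq_sym.
  rewrite hk in k2; move: k1 k2; move: (kappa G E); exact: ar2.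
move=> ab.
have hcE : forall a b, a \in G -> b \in G -> a != b -> [set a; b] \in E.
  by move=> a b ha hb nab; rewrite ceP // ha hb /=; apply/eqP; exact: (centsP ab).
have conn : forall W : {set gT}, W \subset G -> gconnected W E.
  move=> W sW; apply: gconn_intro => a b ha hb nab; left.
  by rewrite /ind_adj ha hb nab hcE // (subsetP sW).
set n := #|G|.
have n1 : 0 < n by rewrite cardG_gt0.
have kE : kappa G E = n.-1.
  apply/eqP; rewrite eqn_leq; apply/andP; split.
    have cd := cardsD1 1%g G; rewrite group1 in cd.
    apply: leq_trans (kappa_le (S := G :\ 1%g) _) _.
      rewrite /is_cutset subsetDl /= cardsDS ?subsetDl //.
      by apply/orP; left; apply/eqP; rewrite -/n; exact: ar3 cd.
    rewrite -/n; exact: ar4 cd.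
  apply: kappa_ge; first exact: leq_pred.
  move=> S /andP[sSG /orP[/eqP h1|nc]].
    rewrite cardsDS // in h1; rewrite -/n in h1 *; exact: ar5 h1.
  by rewrite conn ?subsetDl in nc.
apply/andP; split; first exact: conn.
apply/forall_inP => e he.
case/imset2P: (he) => x y hx; rewrite inE => /andP[hy /andP[nxy _]] ee.
rewrite kE; subst e.
have [cS0 eS0] := cards2G hx hy nxy.
rewrite eqn_leq; apply/andP; split.
  apply: leq_trans (kappa_le (S := G :\: [set x; y]) _) _.
    rewrite /is_cutset subsetDl eS0 cards2 nxy /=.
    by apply: not_conn2 => //; rewrite !inE eqxx.
  rewrite cS0 -/n; exact: ar6.
apply: kappa_ge; first by rewrite -/n; exact: ar7.
move=> S /andP[sSG hS].
have c1 : #|G :\: S| = #|G| - #|S| by rewrite cardsDS.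
have c2 : #|S| <= #|G| by apply: subset_leq_card.
rewrite -/n in c1 c2 *.
case/orP: hS => [/eqP h1|nc]; first by apply: ar8 c1 _; rewrite h1.
apply: (ar8 c1).
rewrite leqNgt; apply/negP => big; move/negP: nc; apply.
set W := G :\: S in big *.
have [c hc] : exists c, c \in W :\: [set x; y].
  apply/set0Pn; rewrite -card_gt0 cardsD.
  have : #|W :&: [set x; y]| <= 2.
    by apply: leq_trans (subset_leq_card (subsetIr W [set x; y])) _; rewrite cards2 nxy.
  exact: ar10 big.
move: hc; rewrite inE in_set2 negb_or => /andP[/andP[cx cy] cW].
have adjc : forall a, a \in W -> a \in [set x; y] -> ind_adj (E :\ [set x; y]) W a c.
  move=> a ha; rewrite in_set2 => hax.
  have nac : a != c by apply/negP=> /eqP ac; subst a; move: hax; rewrite (negbTE cx) (negbTE cy).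
  rewrite /ind_adj ha cW nac !inE hcE //; last first.
    - by move: cW; rewrite inE => /andP[].
    - by move: ha; rewrite inE => /andP[].
  rewrite andbT; apply/negP => /eqP e2.
  have : c \in [set x; y] by rewrite -e2 set22.
  by rewrite in_set2 (negbTE cx) (negbTE cy).
apply: gconn_intro => a b ha hb nab.
case: (boolP ([set a; b] == [set x; y])) => ne.
  right; exists c; split.
    by apply: adjc => //; rewrite -(eqP ne) set21.
  by rewrite ind_adj_sym; apply: adjc => //; rewrite -(eqP ne) set22.
left; rewrite /ind_adj ha hb nab !inE ne hcE //.
  by move: ha; rewrite inE => /andP[].
by move: hb; rewrite inE => /andP[].
Qed.
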